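(* Let $p\colon H\to K$ be a morphism of smooth 2-groups. Then the canonical functor $\kappa\colon\ker^{\mathtt h}(p)\to\mathrm{Cart}$ is a Grothendieck fibration in groupoids.
   Context: $\mathrm{Cart}$ is the category of manifolds diffeomorphic to some $\mathbb R^n$ with smooth maps. A functor $\pi\colon D\to C$ is a Grothendieck fibration in groupoids if every $f\colon c\to\pi(d)$ has a lift $\hat f\colon\hat c\to d$, and every morphism of $D$ is $\pi$-Cartesian (for $\zeta_{12}\colon d_1\to d_2$, $\zeta_{02}\colon d_0\to d_2$ and $f_{01}\colon\pi(d_0)\to\pi(d_1)$ with $\pi(\zeta_{12})f_{01}=\pi(\zeta_{02})$ there is a unique $\hat f_{01}$ over $f_{01}$ with $\zeta_{12}\hat f_{01}=\zeta_{02}$). Smooth 2-groups are group objects (with unit 1-morphism $u$, product, coherent associator and unitors, and $(\otimes,\mathrm{pr}_1)$ an equivalence) in the 2-category of categories equipped with a Grothendieck fibration in groupoids to $\mathrm{Cart}$, whose terminal object is $\mathrm{id}_{\mathrm{Cart}}$; morphisms are functors strictly over $\mathrm{Cart}$ with coherent monoidal structure. For $\pi_H\colon H\to\mathrm{Cart}$, $\ker^{\mathtt h}(p)$ is the homotopy pullback of $\mathrm{Cart}\xrightarrow{u_K}K\xleftarrow{p}H$: its objects are pairs $(h,\eta)$ with $h\in H$ and $\eta\colon p(h)\to u_K(\pi_H(h))$ an isomorphism in $K$ projecting to an identity, and its morphisms $(h_0,\eta_0)\to(h_1,\eta_1)$ are morphisms $\zeta\colon h_0\to h_1$ with $\eta_1\circ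 p(\zeta)=u_K(\pi_H(\zeta))\circ\eta_0$; $\kappa(h,\eta)=\pi_H(h)$, $\kappa(\zeta)=\pi_H(\zeta)$. *)

(* Defs.v *)
From Stdlib Require Import ProofIrrelevance Eqdep.

Record Cat := {
  ob : Type;
  hom : ob -> ob -> Type;
  idm : forall a, hom a a;
  comp : forall a b c, hom b c -> hom a b -> hom a c;
  comp_idl : forall a b (f : hom a b), comp a b b (idm b) f = f;
  comp_idr : forall a b (f : hom a b), comp a a b f (idm a) = f;
  comp_assoc : forall a b c d (f : hom a b) (g : hom b c) (h : hom c d),
      comp a c d h (comp a b c g f) = comp a b d (comp b c d h g) f }.

Arguments hom {_} _ _.
Arguments idm {_} _.
Arguments comp {_ _ _ _} _ _.
Arguments comp_idl {_ _ _} _.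
Arguments comp_idr {_ _ _} _.
Arguments comp_assoc {_ _ _ _ _} f g h.

Definition is_iso (C : Cat) (a b : ob C) (f : hom a b) : Prop :=
  exists g : hom b a, comp g f = idm a /\ comp f g = idm b.
Arguments is_iso {C a b} f.

Record Functor (C D : Cat) := {
  fobj : ob C -> ob D;
  fmap : forall a b, @hom C a b -> @hom D (fobj a) (fobj b);
  fmap_id : forall a, fmap a a (idm a) = idm (fobj a);
  fmap_comp : forall a b c (f : hom a b) (g : hom b c),
      fmap a c (comp g f) = comp (fmap b c g) (fmap a b f) }.

Arguments fobj {C D} _ _.
Arguments fmap {C D} _ {a b} _.
Arguments fmap_id {C D} _ a.
Arguments fmap_comp {C D} _ {a b c} f g.

Definition IdF (C : Cat) : Functor C C :=
  {| fobj := fun a => a; fmap := fun a b f => f;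
     fmap_id := fun a => eq_refl; fmap_comp := fun a b c f g => eq_refl |}.

Definition CompF (C D E : Cat) (F : Functor C D) (G : Functor D E) : Functor C E.
Proof.
  refine {| fobj := fun a => fobj G (fobj F a);
            fmap := fun a b f => fmap G (fmap F f) |}.
  - intro a. rewrite fmap_id. apply fmap_id.
  - intros a b c f g. rewrite fmap_comp. apply fmap_comp.
Defined.
Arguments CompF {C D E} F G.

(** A morphism viewed as a point of the total "arrow type" (source, target,
    morphism).  Equality of such points is how we express that a morphism is
    (strictly) equal to another one whose endpoints are only propositionally
    equal, e.g. "pi(f^) = f" for a lift. *)
Definition arr (C : Cat) := {a : ob C & {b : ob C & @hom C a b}}.
Definition mkarr (C : Cat) (a b : ob C) (f : hom a b) : arr C :=
  existT _ a (existT _ b f).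
Arguments mkarr {C a b} f.

Lemma mkarr_inv (C : Cat) (a b : ob C) (f g : hom a b) :
  mkarr f = mkarr g -> f = g.
Proof.
  unfold mkarr; intro H. apply inj_pairT2 in H. apply inj_pairT2 in H. exact H.
Qed.

Lemma mkarr_comp (C : Cat) (a b c a' b' c' : ob C)
  (f : hom a b) (g : hom b c) (f' : hom a' b') (g' : hom b' c') :
  mkarr f = mkarr f' -> mkarr g = mkarr g' -> mkarr (comp g f) = mkarr (comp g' f').
Proof.
  unfold mkarr; intros H1 H2.
  pose proof (f_equal (@projT1 _ _) H1) as ea; simpl in ea; subst a'.
  apply inj_pairT2 in H1.
  pose proof (f_equal (@projT1 _ _) H1) as eb; simpl in eb; subst b'.
  apply inj_pairT2 in H1; subst f'.
  apply inj_pairT2 in H2.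
  pose proof (f_equal (@projT1 _ _) H2) as ec; simpl in ec; subst c'.
  apply inj_pairT2 in H2; subst g'. reflexivity.
Qed.

Definition is_fib_grpd (D C : Cat) (P : Functor D C) : Prop :=
  (forall (d : ob D) (c : ob C) (f : hom c (fobj P d)),
      exists (c' : ob D) (g : hom c' d), mkarr (fmap P g) = mkarr f) /\
  (forall (d0 d1 d2 : ob D) (z12 : hom d1 d2) (z02 : hom d0 d2)
          (f01 : hom (fobj P d0) (fobj P d1)),
      comp (fmap P z12) f01 = fmap P z02 ->
      exists! g : hom d0 d1, fmap P g = f01 /\ comp z12 g = z02).
Arguments is_fib_grpd {D C} P.

(** * The 2-category of categories over a base [C] *)

Record CatOver (C : Cat) := { tot : Cat; proj : Functor tot C }.
Arguments tot {C} _.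
Arguments proj {C} _.

Record OverFun (C : Cat) (A B : CatOver C) := {
  ofun : Functor (tot A) (tot B);
  ofun_over : forall x y (f : @hom (tot A) x y),
      mkarr (fmap (proj B) (fmap ofun f)) = mkarr (fmap (proj A) f) }.
Arguments OverFun {C} A B.
Arguments ofun {C A B} _.
Arguments ofun_over {C A B} _ {x y} f.

Definition idOF (C : Cat) (A : CatOver C) : OverFun A A :=
  {| ofun := IdF (tot A); ofun_over := fun x y f => eq_refl |}.

Arguments idOF {C} A.

Definition compOF (C : Cat) (A B D : CatOver C) (F : OverFun A B) (G : OverFun B D)
  : OverFun A D :=
  {| ofun := CompF (ofun F) (ofun G);
     ofun_over := fun x y f => eq_trans (ofun_over G (fmap (ofun F) f)) (ofun_over F f) |}.
Arguments compOF {C A B D} F G.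

Record VNatIso (C : Cat) (A B : CatOver C) (F G : OverFun A B) := {
  vcomp : forall x, hom (fobj (ofun F) x) (fobj (ofun G) x);
  vnat : forall x y (f : @hom (tot A) x y),
      comp (vcomp y) (fmap (ofun F) f) = comp (fmap (ofun G) f) (vcomp x);
  vvert : forall x, mkarr (fmap (proj B) (vcomp x)) = mkarr (idm (fobj (proj A) x));
  viso : forall x, is_iso (vcomp x) }.
Arguments VNatIso {C A B} F G.

Definition is_equiv_over (C : Cat) (A B : CatOver C) (F : OverFun A B) : Prop :=
  exists G : OverFun B A,
    inhabited (VNatIso (compOF F G) (idOF A)) /\
    inhabited (VNatIso (compOF G F) (idOF B)).
Arguments is_equiv_over {C A B} F.

Definition TermOver (C : Cat) : CatOver C := {| tot := C; proj := IdF C |}.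

Section FP.
Context (C : Cat) (A B : CatOver C).

Definition FPob : Type :=
  {p : ob (tot A) * ob (tot B) | fobj (proj A) (fst p) = fobj (proj B) (snd p)}.

Definition FPhom (P Q : FPob) : Type :=
  {fg : @hom (tot A) (fst (proj1_sig P)) (fst (proj1_sig Q))
        * @hom (tot B) (snd (proj1_sig P)) (snd (proj1_sig Q))
   | mkarr (fmap (proj A) (fst fg)) = mkarr (fmap (proj B) (snd fg))}.

Definition mkFPhom (P Q : FPob)
  (f : @hom (tot A) (fst (proj1_sig P)) (fst (proj1_sig Q)))
  (g : @hom (tot B) (snd (proj1_sig P)) (snd (proj1_sig Q)))
  (e : mkarr (fmap (proj A) f) = mkarr (fmap (proj B) g)) : FPhom P Q :=
  exist (fun fg => mkarr (fmap (proj A) (fst fg)) = mkarr (fmap (proj B) (snd fg))) (f, g) e.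

Lemma FPhom_eq (P Q : FPob) (f g : FPhom P Q) : proj1_sig f = proj1_sig g -> f = g.
Proof.
  destruct f as [f pf], g as [g pg]; simpl; intro e; subst g.
  f_equal; apply proof_irrelevance.
Qed.

Definition FPid (P : FPob) : FPhom P P.
Proof.
  refine (exist _ (idm _, idm _) _); simpl.
  rewrite !fmap_id. destruct P as [[a b] e]; simpl in *. rewrite e. reflexivity.
Defined.

Definition FPcomp (P Q R : FPob) (g : FPhom Q R) (f : FPhom P Q) : FPhom P R.
Proof.
  refine (exist _ (comp (fst (proj1_sig g)) (fst (proj1_sig f)),
                   comp (snd (proj1_sig g)) (snd (proj1_sig f))) _); simpl.
  rewrite !fmap_comp. apply mkarr_comp.
  - exact (proj2_sig f).
  - exact (proj2_sig g).
Defined.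

Definition FP : Cat.
Proof.
  refine {| ob := FPob; hom := FPhom; idm := FPid; comp := FPcomp |}.
  - intros P Q f; apply FPhom_eq; destruct f as [[f1 f2] pf]; simpl.
    rewrite !comp_idl; reflexivity.
  - intros P Q f; apply FPhom_eq; destruct f as [[f1 f2] pf]; simpl.
    rewrite !comp_idr; reflexivity.
  - intros P Q R S f g h; apply FPhom_eq; simpl.
    rewrite !comp_assoc; reflexivity.
Defined.

Definition FPproj : Functor FP C.
Proof.
  refine (@Build_Functor FP C (fun P : FPob => fobj (proj A) (fst (proj1_sig P)))
            (fun P Q (f : FPhom P Q) => fmap (proj A) (fst (proj1_sig f))) _ _).
  - intro P; simpl; apply fmap_id.
  - intros P Q R f g; simpl; apply fmap_comp.
Defined.

Definition FPover : CatOver C := {| tot := FP; proj := FPproj |}.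

End FP.
Arguments FPover {C} A B.
Arguments FPob {C} A B.
Arguments FPhom {C} A B _ _.
Arguments FP {C} A B.
Arguments mkFPhom {C A B} P Q f g e.
Arguments FPhom_eq {C A B P Q} f g _.

Definition pr1OF (C : Cat) (A B : CatOver C) : OverFun (FPover A B) A.
Proof.
  unshelve refine (@Build_OverFun C (FPover A B) A (@Build_Functor (FP A B) (tot A) (fun P : FPob A B => fst (proj1_sig P))
                       (fun P Q (f : FPhom A B P Q) => fst (proj1_sig f)) _ _) _).
  all: intros; reflexivity.
Defined.
Arguments pr1OF {C} A B.

Lemma over_ob (C : Cat) (X A : CatOver C) (F : OverFun X A) (x : ob (tot X)) :
  fobj (proj A) (fobj (ofun F) x) = fobj (proj X) x.
Proof. exact (f_equal (@projT1 _ _) (ofun_over F (idm x))). Qed.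

Arguments over_ob {C X A} F x.

Definition pairOF (C : Cat) (X A B : CatOver C) (F : OverFun X A) (G : OverFun X B)
  : OverFun X (FPover A B).
Proof.
  unshelve refine (@Build_OverFun C X (FPover A B) (@Build_Functor (tot X) (FP A B) (fun x =>
        exist _ (fobj (ofun F) x, fobj (ofun G) x)
              (eq_trans (over_ob F x) (eq_sym (over_ob G x))) : FPob A B)
      (fun x y f =>
        mkFPhom (exist _ (fobj (ofun F) x, fobj (ofun G) x)
              (eq_trans (over_ob F x) (eq_sym (over_ob G x))))
           (exist _ (fobj (ofun F) y, fobj (ofun G) y)
              (eq_trans (over_ob F y) (eq_sym (over_ob G y))))
          (fmap (ofun F) f) (fmap (ofun G) f)
              (eq_trans (ofun_over F f) (eq_sym (ofun_over G f)))) _ _) _).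
  - intro x; apply FPhom_eq; simpl; rewrite !fmap_id; reflexivity.
  - intros x y z f g; apply FPhom_eq; simpl; rewrite !fmap_comp; reflexivity.
  - intros x y f; simpl. exact (ofun_over F f).
Defined.
Arguments pairOF {C X A B} F G.

(** * Smooth 2-groups over the base [C]

    A group object in the 2-category of categories over [C] (the paper
    takes [C = Cart]).  Natural transformations
    between functors out of (iterated) fibered products are written
    componentwise; since the objects of [H x_C H] carry a proof that the
    two components lie over the same object of [C], components are
    indexed by arbitrary such proofs (by proof irrelevance this is the
    same data as a natural transformation). *)

Section Monoidal.
Context (C : Cat) (H : CatOver C).
Context (u : OverFun (TermOver C) H) (T : OverFun (FPover H H) H).

Local Notation piH := (proj H).
Local Notation Ho := (ob (tot H)).

Definition tensO (x y : Ho) (e : fobj piH x = fobj piH y) : Ho :=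
  fobj (ofun T) (exist _ (x, y) e : FPob H H).

Definition tensM (x x' y y' : Ho) (f : hom x x') (g : hom y y')
  (c : mkarr (fmap piH f) = mkarr (fmap piH g))
  (ex : fobj piH x = fobj piH y) (ex' : fobj piH x' = fobj piH y')
  : hom (tensO x y ex) (tensO x' y' ex') :=
  fmap (ofun T) (mkFPhom (exist _ (x, y) ex : FPob H H) (exist _ (x', y') ex') f g c).

Arguments tensM {x x' y y'} f g c ex ex'.

Definition unitO (c : ob C) : Ho := fobj (ofun u) c.

Definition AssocT : Type :=
  forall (x y z : Ho) (e1 : fobj piH x = fobj piH y)
         (e2 : fobj piH (tensO x y e1) = fobj piH z)
         (e3 : fobj piH y = fobj piH z)
         (e4 : fobj piH x = fobj piH (tensO y z e3)),
    hom (tensO (tensO x y e1) z e2) (tensO x (tensO y z e3) e4).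

Definition LUnitT : Type :=
  forall (x : Ho) (e : fobj piH (unitO (fobj piH x)) = fobj piH x),
    hom (tensO (unitO (fobj piH x)) x e) x.

Definition RUnitT : Type :=
  forall (x : Ho) (e : fobj piH x = fobj piH (unitO (fobj piH x))),
    hom (tensO x (unitO (fobj piH x)) e) x.

Definition assoc_natural (a : AssocT) : Prop :=
  forall (x y z x' y' z' : Ho) (f : hom x x') (g : hom y y') (h : hom z z')
    e1 e2 e3 e4 e1' e2' e3' e4'
    (cfg : mkarr (fmap piH f) = mkarr (fmap piH g))
    (cgh : mkarr (fmap piH g) = mkarr (fmap piH h))
    (c1 : mkarr (fmap piH (tensM f g cfg e1 e1')) = mkarr (fmap piH h))
    (c2 : mkarr (fmap piH f) = mkarr (fmap piH (tensM g h cgh e3 e3'))),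
    comp (a x' y' z' e1' e2' e3' e4') (tensM (tensM f g cfg e1 e1') h c1 e2 e2')
    = comp (tensM f (tensM g h cgh e3 e3') c2 e4 e4') (a x y z e1 e2 e3 e4).

Definition assoc_vertical (a : AssocT) : Prop :=
  forall x y z e1 e2 e3 e4,
    mkarr (fmap piH (a x y z e1 e2 e3 e4))
    = mkarr (idm (fobj piH (tensO (tensO x y e1) z e2))).

Definition assoc_iso (a : AssocT) : Prop :=
  forall x y z e1 e2 e3 e4, is_iso (a x y z e1 e2 e3 e4).

Definition lunit_natural (l : LUnitT) : Prop :=
  forall (x x' : Ho) (f : hom x x') e e'
    (c : mkarr (fmap piH (fmap (ofun u) (fmap piH f))) = mkarr (fmap piH f)),
    comp (l x' e') (tensM (fmap (ofun u) (fmap piH f)) f c e e') = comp f (l x e).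

Definition runit_natural (r : RUnitT) : Prop :=
  forall (x x' : Ho) (f : hom x x') e e'
    (c : mkarr (fmap piH f) = mkarr (fmap piH (fmap (ofun u) (fmap piH f)))),
    comp (r x' e') (tensM f (fmap (ofun u) (fmap piH f)) c e e') = comp f (r x e).

Definition lunit_vertical (l : LUnitT) : Prop :=
  forall x e, mkarr (fmap piH (l x e)) = mkarr (idm (fobj piH x)).
Definition runit_vertical (r : RUnitT) : Prop :=
  forall x e, mkarr (fmap piH (r x e)) = mkarr (idm (fobj piH x)).
Definition lunit_iso (l : LUnitT) : Prop := forall x e, is_iso (l x e).
Definition runit_iso (r : RUnitT) : Prop := forall x e, is_iso (r x e).

Definition pentagon (a : AssocT) : Prop :=
  forall (x y z w : Ho) p1 q1 q2 q3 q4 s3 s4 t3 t4 v1 v3 v4 cB1 cB3,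
    comp (a x y (tensO z w q3) p1 q4 s3 s4) (a (tensO x y p1) z w q1 q2 q3 q4)
    = comp (tensM (idm x) (a y z w t3 v3 q3 s3) cB3 v4 s4)
        (comp (a x (tensO y z t3) w t4 v1 v3 v4)
              (tensM (a x y z p1 q1 t3 t4) (idm w) cB1 q2 v1)).

(** The unit objects
    [u(pi x)] and [u(pi y)] are only propositionally equal, so the two sides
    are compared as arrows (source, target, morphism). *)
Definition triangle (a : AssocT) (l : LUnitT) (r : RUnitT) : Prop :=
  forall (x y : Ho) e1 e2 e3 e4 eb e5 e6 c1 c2,
    mkarr (comp (tensM (idm x) (l y e3) c1 e4 eb)
                (a x (unitO (fobj piH y)) y e1 e2 e3 e4))
    = mkarr (tensM (r x e5) (idm y) c2 e6 eb).

End Monoidal.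

Arguments tensO {C H} T x y e.
Arguments tensM {C H} T {x x' y y'} f g c ex ex'.
Arguments unitO {C H} u c.
Arguments AssocT {C H} T.
Arguments LUnitT {C H} u T.
Arguments RUnitT {C H} u T.
Arguments assoc_natural {C H} T a.
Arguments assoc_vertical {C H} T a.
Arguments assoc_iso {C H} T a.
Arguments lunit_natural {C H} u T l.
Arguments runit_natural {C H} u T r.
Arguments lunit_vertical {C H} u T l.
Arguments runit_vertical {C H} u T r.
Arguments lunit_iso {C H} u T l.
Arguments runit_iso {C H} u T r.
Arguments pentagon {C H} T a.
Arguments triangle {C H} u T a l r.

Record Smooth2Group (C : Cat) := {
  s2_cat : CatOver C;
  s2_fib : is_fib_grpd (proj s2_cat);
  s2_unit : OverFun (TermOver C) s2_cat;
  s2_tens : OverFun (FPover s2_cat s2_cat) s2_cat;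
  s2_assoc : AssocT s2_tens;
  s2_lunit : LUnitT s2_unit s2_tens;
  s2_runit : RUnitT s2_unit s2_tens;
  s2_assoc_nat : assoc_natural s2_tens s2_assoc;
  s2_assoc_vert : assoc_vertical s2_tens s2_assoc;
  s2_assoc_iso : assoc_iso s2_tens s2_assoc;
  s2_lunit_nat : lunit_natural s2_unit s2_tens s2_lunit;
  s2_lunit_vert : lunit_vertical s2_unit s2_tens s2_lunit;
  s2_lunit_iso : lunit_iso s2_unit s2_tens s2_lunit;
  s2_runit_nat : runit_natural s2_unit s2_tens s2_runit;
  s2_runit_vert : runit_vertical s2_unit s2_tens s2_runit;
  s2_runit_iso : runit_iso s2_unit s2_tens s2_runit;
  s2_pentagon : pentagon s2_tens s2_assoc;
  s2_triangle : triangle s2_unit s2_tens s2_assoc s2_lunit s2_runit;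
  s2_shear : is_equiv_over (pairOF s2_tens (pr1OF s2_cat s2_cat)) }.
Arguments s2_cat {C} _.
Arguments s2_unit {C} _.
Arguments s2_tens {C} _.
Arguments s2_assoc {C} _.
Arguments s2_lunit {C} _.
Arguments s2_runit {C} _.

Section Morphism.
Context (C : Cat) (G K : Smooth2Group C).
Local Notation HG := (s2_cat G).
Local Notation HK := (s2_cat K).
Local Notation piG := (proj HG).
Local Notation piK := (proj HK).
Local Notation TG := (s2_tens G).
Local Notation TK := (s2_tens K).
Local Notation uG := (s2_unit G).
Local Notation uK := (s2_unit K).

Record S2Mor := {
  mp : OverFun HG HK;
  mu : forall (x y : ob (tot HG)) (e : fobj piG x = fobj piG y)
              (e' : fobj piK (fobj (ofun mp) x) = fobj piK (fobj (ofun mp) y)),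
      hom (fobj (ofun mp) (tensO TG x y e))
          (tensO TK (fobj (ofun mp) x) (fobj (ofun mp) y) e');
  mu_nat : forall x y x' y' (f : hom x x') (g : hom y y') c c' e1 e1' e2 e2',
      comp (mu x' y' e1' e2') (fmap (ofun mp) (tensM TG f g c e1 e1'))
      = comp (tensM TK (fmap (ofun mp) f) (fmap (ofun mp) g) c' e2 e2') (mu x y e1 e2);
  mu_vert : forall x y e e',
      mkarr (fmap piK (mu x y e e'))
      = mkarr (idm (fobj piK (fobj (ofun mp) (tensO TG x y e))));
  mu_iso : forall x y e e', is_iso (mu x y e e');
  eps : forall c : ob C, hom (fobj (ofun mp) (unitO uG c)) (unitO uK c);
  eps_nat : forall (c c' : ob C) (f : hom c c'),
      comp (eps c') (fmap (ofun mp) (fmap (ofun uG) f))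
      = comp (fmap (ofun uK) f) (eps c);
  eps_vert : forall c, mkarr (fmap piK (eps c)) = mkarr (idm c);
  eps_iso : forall c, is_iso (eps c);
  mu_assoc : forall (x y z : ob (tot HG)) e1 e2 e3 e4 f1 f2 f3 g4 h2 f4 k1 k2,
      comp (tensM TK (idm (fobj (ofun mp) x)) (mu y z e3 f3) k1 f4 g4)
           (comp (mu x (tensO TG y z e3) e4 f4)
                 (fmap (ofun mp) (s2_assoc G x y z e1 e2 e3 e4)))
      = comp (s2_assoc K (fobj (ofun mp) x) (fobj (ofun mp) y) (fobj (ofun mp) z)
                        f1 f2 f3 g4)
             (comp (tensM TK (mu x y e1 f1) (idm (fobj (ofun mp) z)) k2 h2 f2)
                   (mu (tensO TG x y e1) z e2 h2));
  mu_lunit : forall (x : ob (tot HG)) e e0 f1 f2 k,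
      mkarr (fmap (ofun mp) (s2_lunit G x e))
      = mkarr (comp (s2_lunit K (fobj (ofun mp) x) f2)
                 (comp (tensM TK (eps (fobj piK (fobj (ofun mp) x)))
                              (idm (fobj (ofun mp) x)) k f1 f2)
                       (mu (unitO uG (fobj piK (fobj (ofun mp) x))) x e0 f1)));
  mu_runit : forall (x : ob (tot HG)) e e0 f1 f2 k,
      mkarr (fmap (ofun mp) (s2_runit G x e))
      = mkarr (comp (s2_runit K (fobj (ofun mp) x) f2)
                 (comp (tensM TK (idm (fobj (ofun mp) x))
                              (eps (fobj piK (fobj (ofun mp) x))) k f1 f2)
                       (mu x (unitO uG (fobj piK (fobj (ofun mp) x))) e0 f1))) }.

End Morphism.
Arguments S2Mor {C} G K.
Arguments mp {C G K} _.

(** * The homotopy kernel [ker^h(p)] of [p : H -> K] and [kappa] *)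
Section Kernel.
Context (C : Cat) (H K : CatOver C) (p : OverFun H K) (uK : OverFun (TermOver C) K).
Local Notation piH := (proj H).
Local Notation piK := (proj K).

Definition KerOb : Type :=
  {h : ob (tot H) &
   {eta : hom (fobj (ofun p) h) (fobj (ofun uK) (fobj piH h))
    | is_iso eta /\ mkarr (fmap piK eta) = mkarr (idm (fobj piH h))}}.

Definition ker_h (P : KerOb) : ob (tot H) := projT1 P.
Definition ker_eta (P : KerOb) :
  hom (fobj (ofun p) (ker_h P)) (fobj (ofun uK) (fobj piH (ker_h P))) :=
  proj1_sig (projT2 P).

Definition KerHom (P Q : KerOb) : Type :=
  {z : hom (ker_h P) (ker_h Q)
   | comp (ker_eta Q) (fmap (ofun p) z) = comp (fmap (ofun uK) (fmap piH z)) (ker_eta P)}.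

Lemma KerHom_eq (P Q : KerOb) (f g : KerHom P Q) : proj1_sig f = proj1_sig g -> f = g.
Proof.
  destruct f as [f pf], g as [g pg]; simpl; intro e; subst g.
  f_equal; apply proof_irrelevance.
Qed.

Definition Kerid (P : KerOb) : KerHom P P.
Proof.
  refine (exist _ (idm _) _).
  rewrite !fmap_id.
  rewrite comp_idl, comp_idr. reflexivity.
Defined.

Definition Kercomp (P Q R : KerOb) (g : KerHom Q R) (f : KerHom P Q) : KerHom P R.
Proof.
  refine (exist _ (comp (proj1_sig g) (proj1_sig f)) _).
  destruct f as [f pf], g as [g pg]; simpl.
  rewrite !fmap_comp.
  etransitivity; [apply comp_assoc|].
  etransitivity; [apply (f_equal (fun k => comp k (fmap (ofun p) f)) pg)|].
  etransitivity; [symmetry; apply comp_assoc|].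
  etransitivity; [apply (f_equal (fun k => comp (fmap (ofun uK) (fmap piH g)) k) pf)|].
  apply comp_assoc.
Defined.

Definition KerCat : Cat.
Proof.
  refine {| ob := KerOb; hom := KerHom; idm := Kerid; comp := Kercomp |}.
  - intros P Q f; apply KerHom_eq; simpl; apply comp_idl.
  - intros P Q f; apply KerHom_eq; simpl; apply comp_idr.
  - intros P Q R S f g h; apply KerHom_eq; simpl; apply comp_assoc.
Defined.

Definition kappa : Functor KerCat C.
Proof.
  refine (@Build_Functor KerCat C (fun P : KerOb => fobj piH (ker_h P))
            (fun P Q (f : KerHom P Q) => fmap piH (proj1_sig f)) _ _).
  - intro P; simpl; apply fmap_id.
  - intros P Q R f g; simpl; apply fmap_comp.
Defined.

End Kernel.
Arguments KerCat {C H K} p uK.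
Arguments kappa {C H K} p uK.

Definition kappa2 (C : Cat) (H K : Smooth2Group C) (p : S2Mor H K)
  : Functor (KerCat (mp p) (s2_unit K)) C :=
  kappa (mp p) (s2_unit K).
Arguments kappa2 {C H K} p.

(* Main.v *)
Require Import Defs.
From Stdlib Require Import ProofIrrelevance Eqdep.

Definition cart_prop {D C : Cat} (P : Functor D C) : Prop :=
  forall (d0 d1 d2 : ob D) (z12 : hom d1 d2) (z02 : hom d0 d2)
          (f01 : hom (fobj P d0) (fobj P d1)),
      comp (fmap P z12) f01 = fmap P z02 ->
      exists! g : hom d0 d1, fmap P g = f01 /\ comp z12 g = z02.

Lemma arr_id {C : Cat} {a b : ob C} {f : hom a b} {c : ob C} :
  mkarr f = mkarr (idm c) ->
  exists g : hom b a, comp f g = idm b /\ comp g f = idm a /\ mkarr g = mkarr (idm c).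
Proof.
  unfold mkarr; intro H1.
  pose proof (f_equal (@projT1 _ _) H1) as ea; simpl in ea; subst a.
  apply inj_pairT2 in H1.
  pose proof (f_equal (@projT1 _ _) H1) as eb; simpl in eb; subst b.
  apply inj_pairT2 in H1; subst f.
  exists (idm c). rewrite comp_idl. auto.
Qed.

Lemma transp_hom {C : Cat} {a b : ob C} : a = b -> {f : hom a b | mkarr f = mkarr (idm a)}.
Proof. intros e; subst b. exists (idm a). reflexivity. Qed.

Lemma right_inv {D C : Cat} {P : Functor D C} (HP : cart_prop P)
  {d0 d1 : ob D} {z : hom d0 d1} {c : ob C} :
  mkarr (fmap P z) = mkarr (idm c) ->
  exists w : hom d1 d0, comp z w = idm d1 /\ mkarr (fmap P w) = mkarr (idm c).
Proof.
  intro Hz. destruct (arr_id Hz) as [g [H1 [H2 H3]]].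
  destruct (HP d1 d0 d1 z (idm d1) g) as [w [[Hw1 Hw2] _]].
  { rewrite fmap_id. exact H1. }
  exists w. split; [exact Hw2|]. rewrite Hw1. exact H3.
Qed.

Lemma vert_iso {D C : Cat} {P : Functor D C} (HP : cart_prop P)
  {d0 d1 : ob D} {z : hom d0 d1} {c : ob C} :
  mkarr (fmap P z) = mkarr (idm c) -> is_iso z.
Proof.
  intro Hz. destruct (right_inv HP Hz) as [w [Hw1 Hw2]].
  destruct (right_inv HP Hw2) as [w' [Hw'1 _]].
  assert (E : z = w').
  { rewrite <- (comp_idr z), <- Hw'1, comp_assoc, Hw1, comp_idl. reflexivity. }
  exists w. split; [subst; exact Hw'1 | exact Hw1].
Qed.

Lemma cart_cancel {D C : Cat} {P : Functor D C} (HP : cart_prop P)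
  {d0 d1 d2 : ob D} {z : hom d1 d2} {a b : hom d0 d1} :
  comp z a = comp z b -> mkarr (fmap P a) = mkarr (fmap P b) -> a = b.
Proof.
  intros E1 E2. apply mkarr_inv in E2.
  destruct (HP d0 d1 d2 z (comp z a) (fmap P a)) as [g [_ Hu]].
  { symmetry; apply fmap_comp. }
  transitivity g; [symmetry|]; apply Hu; split; auto.
Qed.

Theorem lemma5p18 (C : Cat) (H K : Smooth2Group C) (p : S2Mor H K) :
  is_fib_grpd (kappa2 p).
Proof.
  destruct (@s2_fib C H) as [HlH HcH].
  destruct (@s2_fib C K) as [HlK HcK].
  change (cart_prop (proj (s2_cat H))) in HcH.
  change (cart_prop (proj (s2_cat K))) in HcK.
  set (pp := mp p). set (u := s2_unit K).
  split.
  - intros [h [eta [Hiso Hv]]] c f. simpl in f.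
    destruct (HlH h c f) as [c' [g Hg]].
    destruct (transp_hom (eq_trans (over_ob pp c') (eq_sym (over_ob u (fobj (proj (s2_cat H)) c')))))
      as [f01 Hf01].
    assert (Hf01' : mkarr f01 = mkarr (idm (fobj (proj (s2_cat H)) c'))).
    { rewrite Hf01, (over_ob pp c'). reflexivity. }
    destruct (HcK _ _ _ (fmap (ofun u) (fmap (proj (s2_cat H)) g)) (comp eta (fmap (ofun pp) g)) f01)
      as [eta' [[He1 He2] _]].
    { apply mkarr_inv. rewrite !fmap_comp.
      transitivity (mkarr (comp (fmap (proj (s2_cat H)) g) (idm (fobj (proj (s2_cat H)) c')))).
      { apply mkarr_comp; [exact Hf01'| exact (ofun_over u _)]. }
      rewrite comp_idr. symmetry.
      transitivity (mkarr (comp (idm (fobj (proj (s2_cat H)) h)) (fmap (proj (s2_cat H)) g))).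
      { apply mkarr_comp; [exact (ofun_over pp g)| exact Hv]. }
      rewrite comp_idl. reflexivity. }
    assert (Hv' : mkarr (fmap (proj (s2_cat K)) eta') = mkarr (idm (fobj (proj (s2_cat H)) c'))).
    { rewrite He1. exact Hf01'. }
    pose (Q := existT _ c' (exist _ eta' (conj (vert_iso HcK Hv') Hv')) : KerOb C (s2_cat H) (s2_cat K) pp u).
    exists Q.
    unshelve eexists.
    + exists g. simpl. symmetry. exact He2.
    + simpl. exact Hg.
  - intros [h0 [eta0 [Hi0 Hv0]]] [h1 [eta1 [Hi1 Hv1]]] [h2 [eta2 [Hi2 Hv2]]]
      [z12 Hz12] [z02 Hz02] f01 E. simpl in *.
    unfold ker_eta in Hz12, Hz02; simpl in Hz12, Hz02.
    destruct (HcH h0 h1 h2 z12 z02 f01 E) as [g [[Hg1 Hg2] Hu]].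
    assert (Hk : comp eta1 (fmap (ofun pp) g)
                 = comp (fmap (ofun u) (fmap (proj (s2_cat H)) g)) eta0).
    {
      apply (cart_cancel HcK (z := fmap (ofun u) (fmap (proj (s2_cat H)) z12))).
      - rewrite comp_assoc. etransitivity; [apply (f_equal (fun k => comp k (fmap (ofun pp) g))); symmetry; exact Hz12|].
        rewrite <- comp_assoc, <- fmap_comp, Hg2.
        etransitivity; [exact Hz02|].
        rewrite comp_assoc, <- !fmap_comp, Hg2. reflexivity.
      - rewrite !fmap_comp.
        transitivity (mkarr (comp (idm (fobj (proj (s2_cat H)) h1)) (fmap (proj (s2_cat H)) g))).
        { apply mkarr_comp; [exact (ofun_over pp g)| exact Hv1]. }
        symmetry.
        transitivity (mkarr (comp (fmap (proj (s2_cat H)) g) (idm (fobj (proj (s2_cat H)) h0)))).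
        { apply mkarr_comp; [exact Hv0| exact (ofun_over u _)]. }
        rewrite comp_idl, comp_idr. reflexivity. }
    exists (exist _ g Hk). split.
    + split; [exact Hg1|]. apply KerHom_eq. simpl. exact Hg2.
    + intros [g' Hg'] [H1 H2]. apply KerHom_eq. simpl.
      apply Hu. split; [exact H1|].
      apply (f_equal (@proj1_sig _ _)) in H2. exact H2.
Qed.
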